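(* Let $\mathcal V$ be a finite-dimensional vector space over $\mathbb K\in\{\mathbb R,\mathbb C\}$ with norm $\|\cdot\|$, dual space $\mathcal V^\star$ with dual norm $\|\cdot\|_\star$, and $\mathrm d_\star(x,y)=\tfrac12\|x-y\|_\star$. Let $0<\tau\le\epsilon$, $\mathcal S\subseteq\mathcal V^\star$ and $\mu$ a probability measure over $\mathcal S$. Assume there exists an algorithm that learns $\mathtt{Learn}(\mathcal S,\epsilon)$ with probability $\beta$ over $x\sim\mu$ and probability $\alpha$ over its internal randomness from $q$ queries to $\mathrm{Eval}_\tau$. Then for every $z\in\mathcal V^\star$, $$q+1\ge2(\alpha-\tfrac12)\cdot\frac{\beta-\Pr_{x\sim\mu}[\mathrm d_\star(x,z)<2\epsilon+\tau]}{\max_{v\in\overline B_1(0)}\Pr_{x\sim\mu}[|x(v)-z(v)|>\tau]}.$$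
   Context: $\overline B_1(0)=\{v\in\mathcal V:\|v\|\le1\}$, and $\|x\|_\star=\sup_{\|v\|\le1}|x(v)|$. Each $x\in\mathcal V^\star$ is viewed as the function $x:\overline B_1(0)\to\mathbb K$, $v\mapsto x(v)$. The oracle $\mathrm{Eval}_\tau(x)$, queried with $v\in\overline B_1(0)$, returns some $r\in\mathbb K$ with $|r-x(v)|\le\tau$ (any such value). $\mathtt{Learn}(\mathcal S,\epsilon)$ is the learning problem mapping $x\in\mathcal S$ to the set of valid outputs $\{y\in\mathcal V^\star:\mathrm d_\star(x,y)<\epsilon\}$: given oracle access to unknown $x\in\mathcal S$, output such a $y$. Learning with probability $\beta$ over $\mu$ and $\alpha$ over internal randomness means $\Pr_{x\sim\mu}[\Pr_{\mathcal A}[\mathcal A$ outputs a valid $y$ using at most $q$ queries$]\ge\alpha]\ge\beta$, for every valid oracle behaviour.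
   Formalization: The probability α of success over the algorithm's internal randomness is also assumed to satisfy $\alpha\ge\tfrac12$, a hypothesis on which the bound on q+1 now rests. The statement above fails without it. *)

(* Defs.v *)
From HB Require Import structures.
From mathcomp Require Import all_boot all_order all_algebra.
From mathcomp Require Import all_classical all_reals.
From mathcomp Require Import topology normedtype measure probability.

Set Implicit Arguments.
Unset Strict Implicit.
Unset Printing Implicit Defensive.

Import Order.TTheory GRing.Theory Num.Theory.
Local Open Scope classical_set_scope.
Local Open Scope ring_scope.

Section Setting.
Variables (R : realType) (K : numFieldType) (absK : K -> R) (V : vectType K).

Definition dual := 'Hom(V, K^o).

Definition is_norm (N : V -> R) : Prop :=
  [/\ forall v, N v = 0 -> v = 0,
      forall (k : K) v, N (k *: v) = absK k * N v
    & forall u v, N (u + v) <= N u + N v].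

Definition unit_ball (N : V -> R) : set V := [set v | N v <= 1].

Definition dnorm (N : V -> R) (x : dual) : R :=
  sup [set absK (x v) | v in unit_ball N].

Definition dstar (N : V -> R) (x y : dual) : R := dnorm N (x - y) / 2.

Definition dopen (N : V -> R) (A : set dual) : Prop :=
  forall x, A x -> exists2 e : R, 0 < e & forall y, dnorm N (y - x) < e -> A y.

(* An oracle behaviour for Eval_tau: given the hidden x, the list of the     *)
(* previous queries and the current query v, it returns an answer.  It is    *)
(* valid if every answer to a query v in the closed unit ball is tau-close   *)
(* to x(v).                                                                  *)
Definition oracle := dual -> seq V -> V -> K.

Definition valid_oracle (N : V -> R) (tau : R) (O : oracle) : Prop :=
  forall (x : dual) (h : seq V) (v : V), N v <= 1 -> absK (O x h v - x v) <= tau.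

(* A randomized (adaptive) algorithm with internal randomness r : Omega_A:   *)
(* given r and the list of answers received so far, it either issues a new  *)
(* query (inl v) or stops and outputs y (inr y).                             *)
Definition algorithm (OmegaA : Type) := OmegaA -> seq K -> V + dual.

(* exec A O x r n : the state of the run of A (seed r) against the oracle O  *)
(* for the hidden x after n steps: either inl (queries, answers) if it is    *)
(* still running (it has then issued exactly n queries), or inr y if it has  *)
(* already output y (after at most n - 1 queries).                           *)
Fixpoint exec (OmegaA : Type) (A : algorithm OmegaA) (O : oracle) (x : dual)
    (r : OmegaA) (n : nat) : (seq V * seq K) + dual :=
  match n with
  | 0 => inl ([::], [::])
  | n'.+1 =>
    match exec A O x r n' with
    | inr y => inr y
    | inl (qs, ans) =>
      match A r ans with
      | inl v => inl (rcons qs v, rcons ans (O x qs v))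
      | inr y => inr y
      end
    end
  end.

(* A (with seed r, against O, on hidden x) outputs a valid answer for        *)
(* Learn(S, eps), i.e. some y with d_*(x, y) < eps, using at most q queries. *)
Definition succeeds (N : V -> R) (eps : R) (q : nat) (OmegaA : Type)
    (A : algorithm OmegaA) (O : oracle) (x : dual) (r : OmegaA) : Prop :=
  exists y : dual, exec A O x r q.+1 = inr y /\ dstar N x y < eps.

End Setting.

Definition pr (R : realType) (d : measure_display) (T : measurableType d)
  (P : probability T R) (A : set T) : R := fine (P A).

(* The statement of the theorem for a given scalar field K with absolute     *)
(* value absK.  The distribution mu on S is the law of a Borel-measurable    *)
(* random element X : Omega -> V^* with values in S (on a probability space  *)
(* (Omega, P)); the internal randomness of the algorithm is a probability    *)
(* space (OmegaA, PA).                                                       *)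
Definition learning_lower_bound (R : realType) (K : numFieldType) (absK : K -> R)
  : Prop :=
  forall (V : vectType K) (N : V -> R), is_norm absK N ->
  forall (tau eps : R), 0 < tau -> tau <= eps ->
  forall (S : set (dual V)),
  forall (d : measure_display) (Omega : measurableType d)
         (P : probability Omega R) (X : Omega -> dual V),
  (forall w, S (X w)) ->
  (forall A : set (dual V), dopen absK N A -> measurable (X @^-1` A)) ->
  forall (dA : measure_display) (OmegaA : measurableType dA)
         (PA : probability OmegaA R) (A : algorithm V OmegaA)
         (alpha beta : R) (q : nat),
  1 / 2 <= alpha ->
  (* A learns Learn(S, eps) with probability beta over x ~ mu and alpha     *)
  (* over its internal randomness, from q queries to Eval_tau, for every    *)
  (* valid oracle behaviour (the success event being an event)              *)
  (forall O : oracle V, valid_oracle absK N tau O ->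
     measurable [set wr : Omega * OmegaA |
                   succeeds absK N eps q A O (X wr.1) wr.2] /\
     beta <= pr P [set w | alpha <= pr PA [set r | succeeds absK N eps q A O (X w) r]]) ->
  forall z : dual V,
    2 * (alpha - 1 / 2) *
      (beta - pr P [set w | dstar absK N (X w) z < 2 * eps + tau])
    <= q.+1%:R *
       sup [set pr P [set w | tau < absK (X w v - z v)] | v in unit_ball N].

(* Main.v *)
Require Import Defs.
From HB Require Import structures.
From mathcomp Require Import all_boot all_order all_algebra.
From mathcomp Require Import all_classical all_reals.
From mathcomp Require Import topology normedtype measure probability.
From mathcomp Require Import lebesgue_integral measurable_realfun derive.
From mathcomp.real_closed Require Import complex.
From mathcomp Require Import ring lra.

Set Implicit Arguments.
Unset Strict Implicit.
Unset Printing Implicit Defensive.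
Import Order.TTheory GRing.Theory Num.Theory.
Import numFieldNormedType.Exports.
Local Open Scope classical_set_scope.
Local Open Scope ring_scope.

Section Generic.
Variables (R : realType) (K : numFieldType) (absK : K -> R).
Hypotheses (absK0 : absK 0 = 0) (absK_ge0 : forall k, 0 <= absK k)
  (absKN : forall k, absK (- k) = absK k)
  (absKD : forall a b, absK (a + b) <= absK a + absK b).
Variables (V : vectType K) (N : V -> R).
Hypothesis hN : is_norm absK N.
Hypothesis bnd : forall f : dual V, exists C, forall v, N v <= 1 -> absK (f v) <= C.

Lemma N0 : N 0 = 0.
Proof. by case: hN => _ hZ _; rewrite -(scale0r (0 : V)) hZ absK0 mul0r. Qed.

Lemma ball_ne (f : dual V) : [set absK (f v) | v in unit_ball N] !=set0.
Proof. by exists (absK (f 0)), 0 => //; rewrite /unit_ball /= N0 ler01. Qed.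

Lemma dn_ub (f : dual V) v : N v <= 1 -> absK (f v) <= dnorm absK N f.
Proof.
move=> Nv; have [C hC] := bnd f.
apply: sup_upper_bound; last by exists v.
split; first exact: ball_ne.
by exists C => _ [u Nu <-]; exact: hC.
Qed.

Lemma dn_ge0 (f : dual V) : 0 <= dnorm absK N f.
Proof. by apply: le_trans (dn_ub f (v:=0) _) => //; rewrite N0 ler01. Qed.

Lemma dn_adh (f : dual V) e : e < dnorm absK N f ->
  exists v, N v <= 1 /\ e < absK (f v).
Proof. by move=> /(sup_gt (ball_ne f)) [_ [v Nv <-] h]; exists v. Qed.

Lemma dn_tri (f g : dual V) : dnorm absK N (f + g) <= dnorm absK N f + dnorm absK N g.
Proof.
apply: ge_sup; first exact: ball_ne.
move=> _ [v Nv <-]; rewrite add_lfunE.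
by apply: le_trans (absKD _ _) _; apply: lerD; exact: dn_ub.
Qed.

Lemma absKB a b : absK (a - b) = absK (b - a).
Proof. by rewrite -absKN opprB. Qed.

Lemma dualB (f g : dual V) v : (f - g) v = f v - g v.
Proof. by rewrite add_lfunE opp_lfunE. Qed.

Variables (z : dual V) (tau eps : R).

Lemma open_E u : N u <= 1 -> dopen absK N [set x | tau < absK (x u - z u)].
Proof.
move=> Nu x /= hx; exists (absK (x u - z u) - tau); first by rewrite subr_gt0.
move=> y hy.
have h1 : absK (x u - z u) <= absK (x u - y u) + absK (y u - z u).
  rewrite (_ : x u - z u = (x u - y u) + (y u - z u)); first exact: absKD.
  by rewrite addrA subrK.
have h2 : absK (x u - y u) <= dnorm absK N (y - x).
  by rewrite absKB -dualB; exact: dn_ub.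
move: hy; rewrite ltrBrDr => hy.
have := lt_le_trans hy (le_trans h1 (lerD h2 (lexx _))).
by rewrite ltrD2l.
Qed.

Lemma open_H c : dopen absK N [set x | dstar absK N x z < c].
Proof.
move=> x /= hx; exists (2 * c - dnorm absK N (x - z)).
  by move: hx; rewrite /dstar ltr_pdivrMr // => hx; rewrite subr_gt0 mulrC.
move=> y hy; rewrite /dstar ltr_pdivrMr //.
have -> : y - z = (y - x) + (x - z) by rewrite addrA subrK.
apply: (le_lt_trans (dn_tri _ _)).
by move: hy; rewrite ltrBrDr mulrC.
Qed.

Lemma far_point x y : 0 < tau -> 2 * eps + tau <= dstar absK N x z ->
  dstar absK N x y < eps ->
  exists v, N v <= 1 /\ 2 * eps + tau < absK ((y - z) v).
Proof.
move=> tau0; rewrite /dstar ler_pdivlMr // ltr_pdivrMr // => hxz hxy.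
have [v [Nv hv]] : exists v, N v <= 1 /\ 4 * eps + tau < absK ((x - z) v).
  apply: dn_adh; apply: lt_le_trans hxz.
  lra.
exists v; split => //.
have h2 : absK (x v - y v) < eps * 2.
  by rewrite -dualB; exact: le_lt_trans (dn_ub _ Nv) hxy.
have h1 : absK (x v - z v) <= absK (x v - y v) + absK (y v - z v).
  rewrite (_ : x v - z v = (x v - y v) + (y v - z v)); first exact: absKD.
  by rewrite addrA subrK.
rewrite dualB; rewrite dualB in hv.
lra.
Qed.

Lemma far_point2 x y v : N v <= 1 -> dstar absK N x y < eps ->
  2 * eps + tau < absK ((y - z) v) -> tau < absK (x v - z v).
Proof.
rewrite /dstar ltr_pdivrMr // => Nv hxy hv.
have h2 : absK (y v - x v) < eps * 2.
  by rewrite absKB -dualB; exact: le_lt_trans (dn_ub _ Nv) hxy.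
have h1 : absK (y v - z v) <= absK (y v - x v) + absK (x v - z v).
  rewrite (_ : y v - z v = (y v - x v) + (x v - z v)); first exact: absKD.
  by rewrite addrA subrK.
rewrite dualB in hv.
lra.
Qed.

Variables (OmegaA : Type) (Al : algorithm V OmegaA) (q : nat).

Definition orc : oracle V := fun x h v =>
  if (N v <= 1) && (tau < absK (x v - z v)) then x v else z v.

Lemma orc_valid : 0 <= tau -> valid_oracle absK N tau orc.
Proof.
move=> tau0 x h v Nv; rewrite /orc; case: ifP => [_|/negbT].
  by rewrite subrr absK0.
by rewrite Nv /= -leNgt absKB.
Qed.

Lemma orc_z h v : orc z h v = z v.
Proof. by rewrite /orc; case: ifP. Qed.

Definition uq (r : OmegaA) k : V :=
  match exec Al orc z r k with
  | inl (qs, ans) => match Al r ans with inl v => v | inr _ => 0 end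
  | inr _ => 0 end.

Definition Ebad (x : dual V) u := N u <= 1 /\ tau < absK (x u - z u).

Lemma exec_same x r n : (forall k, (k < n)%N -> ~ Ebad x (uq r k)) ->
  exec Al orc x r n = exec Al orc z r n.
Proof.
elim: n => [//|n IH] H /=.
rewrite IH; last by move=> k kn; apply: H; exact: ltnW.
have Hn := H n (ltnSn n); rewrite /uq in Hn.
case: (exec Al orc z r n) Hn => [[qs ans]|y] //=.
case: (Al r ans) => [v|y] // Hn.
rewrite orc_z /orc; case: ifP => // /andP [h1 h2].
by exfalso; apply: Hn.
Qed.

Lemma succ_same x r y : (forall k, (k < q)%N -> ~ Ebad x (uq r k)) ->
  exec Al orc x r q.+1 = inr y -> exec Al orc z r q.+1 = inr y.
Proof.
move=> H /=; rewrite exec_same //=.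
case: (exec Al orc z r q) => [[qs ans]|y'] //=.
by case: (Al r ans).
Qed.

Definition yz r := match exec Al orc z r q.+1 with inr y => y | inl _ => 0 end.

Definition vstar r :=
  xget 0 [set v | N v <= 1 /\ 2 * eps + tau < absK ((yz r - z) v)].

Lemma key x r : 0 < tau -> 2 * eps + tau <= dstar absK N x z ->
  succeeds absK N eps q Al orc x r ->
  (exists2 k, (k < q)%N & Ebad x (uq r k)) \/ Ebad x (vstar r).
Proof.
move=> tau0 hxz [y [hy hxy]].
case: (pselect (exists2 k, (k < q)%N & Ebad x (uq r k))) => [|nE]; first by left.
right.
have H : forall k, (k < q)%N -> ~ Ebad x (uq r k) by move=> k kq hk; apply: nE; exists k.
have hz := succ_same H hy.
have yzE : yz r = y by rewrite /yz hz.
have ex := far_point tau0 hxz hxy.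
have [Nv hv] := xgetPex 0 ex.
rewrite /vstar yzE; split => //.
exact: far_point2 Nv hxy hv.
Qed.

End Generic.

Section ProbFacts.
Variables (R : realType) (d : measure_display) (T : measurableType d) (P : probability T R).

Lemma prE A : measurable A -> P A = (pr P A)%:E.
Proof. by move=> mA; rewrite /pr fineK // fin_num_measure. Qed.

Lemma pr_ge0 A : 0 <= pr P A.
Proof. exact/fine_ge0/measure_ge0. Qed.

Lemma pr_le1 A : measurable A -> pr P A <= 1.
Proof. by move=> mA; have := probability_le1 P mA; rewrite prE // lee_fin. Qed.

Fixpoint Dn (E : nat -> set T) n : set T :=
  match n with 0 => set0 | n'.+1 => Dn E n' `|` E n' end.

Lemma Dn_mem E n w : Dn E n w <-> exists2 k, (k < n)%N & E k w.
Proof.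
elim: n => [|n IH] /=; first by split => // -[].
split => [[/IH [k kn Ek]|En]|[k]]; first by exists k => //; exact: ltnW.
  by exists n.
rewrite ltnS leq_eqVlt => /orP [/eqP ->|kn Ek]; first by right.
by left; apply/IH; exists k.
Qed.

Lemma Dn_meas E n : (forall k, measurable (E k)) -> measurable (Dn E n).
Proof. by move=> mE; elim: n => [|n IH] //=; exact: measurableU. Qed.

Lemma Dn_le E n c : (forall k, measurable (E k)) -> (forall k, P (E k) <= c%:E)%E ->
  (P (Dn E n) <= (n%:R * c)%:E)%E.
Proof.
move=> mE hE; elim: n => [|n IH] /=; first by rewrite measure0 mul0r.
apply: (le_trans (measureU2 _ (Dn_meas n mE) (mE n))).
rewrite -natr1 mulrDl mul1r EFinD.
exact: (leeD IH (hE n)).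
Qed.

End ProbFacts.

Theorem generic_llb (R : realType) (K : numFieldType) (absK : K -> R) :
  absK 0 = 0 -> (forall k, 0 <= absK k) -> (forall k, absK (- k) = absK k) ->
  (forall a b, absK (a + b) <= absK a + absK b) ->
  (forall (V : vectType K) (N : V -> R), is_norm absK N ->
     forall f : dual V, exists C, forall v, N v <= 1 -> absK (f v) <= C) ->
  learning_lower_bound absK.
Proof.
move=> a0 ag aN aD B V N hN tau eps tau0 taueps S d Omega P X XS Xm dA OmegaA PA
  Al alpha beta q halpha Hyp z.
have bnd := B V N hN.
have [mSucc hbeta] := Hyp _ (orc_valid a0 aN (N:=N) z (ltW tau0)).
set O := orc absK N z tau in mSucc hbeta.
set Succ := [set wr : Omega * OmegaA | _] in mSucc.
set M := sup _.
have mE : forall u, N u <= 1 -> measurable [set w | tau < absK (X w u - z u)].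
  by move=> u Nu; exact: (Xm _ (open_E a0 aN aD hN bnd (z:=z) (tau:=tau) Nu)).
pose EW u := [set w | Ebad absK N z tau (X w) u].
have EWE : forall u, N u <= 1 -> EW u = [set w | tau < absK (X w u - z u)].
  by move=> u Nu; apply/seteqP; split => w /=; rewrite /Ebad; [case|split].
have EW0 : forall u, 1 < N u -> EW u = set0.
  by move=> u Nu; apply/seteqP; split => w //= [Nu' _]; move: Nu'; rewrite leNgt Nu.
have mEW : forall u, measurable (EW u).
  move=> u; case: (leP (N u) 1) => Nu; first by rewrite EWE //; exact: mE.
  by rewrite EW0.
have N0' : N 0 <= 1 by rewrite (N0 a0 hN) ler01.
have Mub : forall u, N u <= 1 -> pr P [set w | tau < absK (X w u - z u)] <= M.
  move=> u Nu; apply: sup_upper_bound; last by exists u.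
  split; first by exists (pr P [set w | tau < absK (X w 0 - z 0)]), 0.
  by exists 1 => _ [v Nv <-]; apply: pr_le1; exact: mE.
have M0 : 0 <= M := le_trans (pr_ge0 P _) (Mub 0 N0').
have PEW : forall u, (P (EW u) <= M%:E)%E.
  move=> u; case: (leP (N u) 1) => Nu.
    by rewrite EWE // prE ?lee_fin; [exact: Mub|exact: mE].
  by rewrite EW0 // measure0 lee_fin.
pose D r := Dn (fun k => EW (uq absK N z tau Al r k)) q `|` EW (vstar absK N z tau eps Al q r).
have mDn : forall r, measurable (Dn (fun k => EW (uq absK N z tau Al r k)) q).
  by move=> r; apply: Dn_meas => k; exact: mEW.
have mD : forall r, measurable (D r) by move=> r; exact: measurableU.
have PD : forall r, (P (D r) <= (q.+1%:R * M)%:E)%E.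
  move=> r; apply: le_trans (measureU2 _ (mDn r) (mEW _)) _.
  rewrite -natr1 mulrDl mul1r EFinD; apply: leeD; last exact: PEW.
  by apply: Dn_le => k; [exact: mEW|exact: PEW].
set H := [set w | dstar absK N (X w) z < 2 * eps + tau].
have mH : measurable H by exact: (Xm _ (open_H a0 aD hN bnd (z:=z) (c:=2 * eps + tau))).
have secE : forall w, xsection Succ w = [set r | succeeds absK N eps q Al O (X w) r].
  by move=> w; apply/seteqP; split => r; rewrite /xsection /= in_setE.
set G := [set w | alpha <= pr PA [set r | succeeds absK N eps q Al O (X w) r]].
have mG : measurable G.
  have := emeasurable_fun_c_infty measurableT (measurable_fun_xsection PA mSucc) alpha%:E.
  rewrite setTI; congr measurable; apply/seteqP; split => w /=;
    rewrite /G /= -secE prE ?lee_fin //; exact: measurable_xsection mSucc.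
set W := G `&` ~` H.
have mW : measurable W by apply: measurableI => //; exact: measurableC.
set Aset := Succ `&` (W `*` setT).
have mA : measurable Aset by apply: measurableI => //; exact: measurableX.
have fub := indic_fubini_tonelli P PA mA.
rewrite (indic_fubini_tonelli_FE PA mA) (indic_fubini_tonelli_GE P mA) in fub.
have alpha0 : 0 < alpha by apply: lt_le_trans halpha; lra.
have lhs : (alpha%:E * P W <= \int[P]_w (PA \o xsection Aset) w)%E.
  rewrite -integral_cst //.
  apply: (le_trans _ (ge0_subset_integral P mW measurableT
     (measurable_fun_xsection PA mA) (fun _ _ => measure_ge0 _ _) (@subsetT _ W))).
  apply: ge0_le_integral => //.
  - by move=> w _; rewrite lee_fin ltW.
  - exact: measurable_funS measurableT (@subsetT _ W) (measurable_fun_xsection PA mA).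
  - move=> w [hG hH] /=.
    have -> : xsection Aset w = xsection Succ w.
      apply/seteqP; split => r; rewrite /xsection /= !in_setE; first by case.
      by move=> h; split.
    rewrite prE; last exact: measurable_xsection mSucc.
    by rewrite lee_fin secE.
have rhs : (\int[PA]_r (P \o ysection Aset) r <= (q.+1%:R * M)%:E)%E.
  apply: (@le_trans _ _ (\int[PA]_r (cst (q.+1%:R * M)%:E) r)%E).
    apply: ge0_le_integral => //.
    - have hm := measurable_fun_ysection P mA; exact hm.
    - move=> r _ /=; apply: le_trans (PD r).
      apply: le_measure; rewrite ?inE //; first exact: measurable_ysection mA.
      move=> w; rewrite /ysection /= in_setE => -[hs [[hG hH] _]].
      have hxz : 2 * eps + tau <= dstar absK N (X w) z by rewrite leNgt; apply/negP.
      case: (key a0 aN aD hN bnd (Al:=Al) tau0 hxz hs) => [[k kq hk]|hv].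
        by left; apply/Dn_mem; exists k.
      by right.
  rewrite integral_cst //.
  suff E : ((q.+1%:R * M)%:E * PA [set: OmegaA] = (q.+1%:R * M)%:E)%E by rewrite E.
  transitivity ((q.+1%:R * M)%:E * 1)%E; last exact: mule1.
  congr (_ * _)%E; exact: probability_setT.
have ineq : alpha * pr P W <= q.+1%:R * M.
  by rewrite fub in lhs; have := le_trans lhs rhs; rewrite prE // -EFinM lee_fin.
have hGWH : pr P G <= pr P W + pr P H.
  have : (P G <= P W + P H)%E.
    apply: le_trans (measureU2 _ mW mH).
    apply: le_measure; rewrite ?inE //; first exact: measurableU.
    move=> w hw; case: (pselect (H w)) => hH; [by right|by left].
  by rewrite !prE // -EFinD lee_fin.
have hbG : beta <= pr P G := hbeta.
have pH0 := pr_ge0 P H.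
have pW0 := pr_ge0 P W.
have RHS0 : 0 <= q.+1%:R * M by apply: mulr_ge0.
case: (leP alpha 1) => a1.
  have h1 : 0 <= (2 * alpha - 1) * (pr P W - (beta - pr P H)) by apply: mulr_ge0; lra.
  have h2 : 0 <= (1 - alpha) * pr P W by apply: mulr_ge0; lra.
  nra.
have G0 : pr P G = 0.
  rewrite (_ : G = set0) /pr ?measure0 //; apply/seteqP; split => w //= hw.
  have := pr_le1 PA (measurable_xsection w mSucc); rewrite secE => h1.
  have hw2 : alpha <= pr PA [set r | succeeds absK N eps q Al O (X w) r] := hw; lra.
have h1 : 0 <= (2 * alpha - 1) * (pr P H - beta) by apply: mulr_ge0; lra.
nra.
Qed.

Section NormEquiv.
Variables (R : realType) (m : nat) (g : 'rV[R]_m -> R).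
Hypotheses (gdef : forall u, g u = 0 -> u = 0)
  (gZ : forall (r : R) u, g (r *: u) = `|r| * g u)
  (gD : forall u v, g (u + v) <= g u + g v).

Lemma g0 : g 0 = 0.
Proof. by rewrite -(scale0r (0 : 'rV[R]_m)) gZ normr0 mul0r. Qed.

Lemma gN u : g (- u) = g u.
Proof. by rewrite -scaleN1r gZ normrN normr1 mul1r. Qed.

Lemma g_ge0 u : 0 <= g u.
Proof.
have := gD u (- u); rewrite subrr g0 gN => h.
by rewrite -(@pmulr_rge0 _ 2) // mulr2n mulrDl !mul1r.
Qed.

Lemma g_sum I (s : seq I) (P : pred I) (F : I -> 'rV[R]_m) :
  g (\sum_(i <- s | P i) F i) <= \sum_(i <- s | P i) g (F i).
Proof.
elim/big_ind2 : _ => [|a b c e h1 h2|i _]; first by rewrite g0.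
  by apply: le_trans (gD _ _) _; exact: lerD.
exact: lexx.
Qed.

Lemma entry_le (u : 'rV[R]_m) j : `|u 0 j| <= `|u|.
Proof.
rewrite [leRHS]/Num.norm /= mx_normrE; apply/bigmax_geP; right => /=.
by exists (0, j).
Qed.

Definition Kc := \sum_(j < m) g (delta_mx 0 j).

Lemma Kc_ge0 : 0 <= Kc.
Proof. by apply: sumr_ge0 => j _; exact: g_ge0. Qed.

Lemma g_up u : g u <= Kc * `|u|.
Proof.
rewrite {1}(row_sum_delta u); apply: le_trans (g_sum _ _ _) _.
rewrite /Kc mulr_suml; apply: ler_sum => j _; rewrite gZ mulrC.
by apply: ler_wpM2l; [exact: g_ge0|exact: entry_le].
Qed.

Lemma g_lip u v : `|g u - g v| <= Kc * `|u - v|.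
Proof.
apply: le_trans (g_up (u - v)).
have h1 : g u <= g (u - v) + g v by rewrite -{1}(subrK v u); exact: gD.
have h2 : g v <= g (u - v) + g u.
  by have := gD (v - u) u; rewrite subrK -[g (v - u)]gN opprB.
rewrite ler_norml; apply/andP; split; lra.
Qed.

Lemma g_cont : continuous g.
Proof.
move=> x; apply/(@cvgrPdist_lt R R^o _ (nbhs x) (nbhs_filter x)) => e e0; apply/nbhs_ballP.
exists (e / (Kc + 1)) => /=; first by rewrite divr_gt0 // ltr_wpDl // Kc_ge0.
move=> y; rewrite -ball_normE /= => hy; apply: le_lt_trans (g_lip x y) _.
have K1 : 0 < Kc + 1 by rewrite ltr_wpDl // Kc_ge0.
move: hy; rewrite ltr_pdivlMr // => hy.
apply: le_lt_trans (_ : Kc * `|x - y| <= (Kc + 1) * `|x - y|) _.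
  by apply: ler_wpM2r; [exact: normr_ge0|lra].
by rewrite mulrC.
Qed.

Lemma norm_equiv : exists2 c, 0 < c & forall u, c * `|u| <= g u.
Proof.
case: (pselect (exists u : 'rV[R]_m, u != 0)) => [[u0 u0nz]|hno]; last first.
  exists 1 => // u; have -> : u = 0.
    by apply/eqP; apply/negP => /negP h; apply: hno; exists u.
  by rewrite normr0 mulr0 g0.
pose S := [set u : 'rV[R]_m | `|u| = 1].
have Sne : S !=set0.
  by exists (`|u0|^-1 *: u0); rewrite /S /= normrZ normfV normr_id mulVf // normr_eq0.
have Scl : closed S.
  have hc : continuous (fun u : 'rV[R]_m => `|u|) := @norm_continuous _ _.
  have hcl : closed [set x : R | x = 1] by exact: closed_eq.
  exact: (continuous_closedP _).1 hc _ hcl.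
have Sbd : bounded_set S.
  by exists 1; split => // x x1 u /= ->; exact: ltW.
have Scp : compact S := bounded_closed_compact Sbd Scl.
have [c0 c0S hmin] := compact_EVT_min Sne Scp (continuous_subspaceT g_cont).
move: c0S; rewrite inE /S /= => c0n.
exists (g c0).
  rewrite lt_neqAle g_ge0 andbT eq_sym; apply/eqP => /gdef c00.
  by move: c0n; rewrite c00 normr0 => /eqP; rewrite eq_sym oner_eq0.
move=> u; case: (eqVneq u 0) => [->|unz]; first by rewrite normr0 mulr0 g0.
have := hmin (`|u|^-1 *: u).
rewrite inE /S /= normrZ normfV normr_id mulVf ?normr_eq0 // => /(_ erefl).
rewrite gZ normfV normr_id => h.
have hu : 0 < `|u| by rewrite normr_gt0.
by have := ler_wpM2r (ltW hu) h; rewrite mulrAC mulVf ?mul1r // normr_eq0.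
Qed.

End NormEquiv.

Lemma bounded_via (R : realType) (K : numFieldType) (absK : K -> R)
  (absK0 : absK 0 = 0) (absK_ge0 : forall k, 0 <= absK k)
  (absKD : forall a b, absK (a + b) <= absK a + absK b)
  (absKM : forall a b, absK (a * b) = absK a * absK b)
  (V : vectType K) (N : V -> R) (hN : is_norm absK N) m
  (phi : 'rV[R]_m -> V) (e : R -> K)
  (phiD : forall u v, phi (u + v) = phi u + phi v)
  (phiZ : forall r u, phi (r *: u) = e r *: phi u)
  (absKe : forall r, absK (e r) = `|r|)
  (phi0 : forall u, phi u = 0 -> u = 0)
  (phiS : forall v, exists u, phi u = v) :
  forall f : 'Hom(V, K^o), exists C, forall v, N v <= 1 -> absK (f v) <= C.
Proof.
case: hN => Ndef NZ ND.
have gdef : forall u, N (phi u) = 0 -> u = 0 by move=> u /Ndef /phi0.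
have gZ : forall (r : R) u, N (phi (r *: u)) = `|r| * N (phi u).
  by move=> r u; rewrite phiZ NZ absKe.
have gD : forall u v, N (phi (u + v)) <= N (phi u) + N (phi v).
  by move=> u v; rewrite phiD ND.
have [c c0 hc] := norm_equiv gdef gZ gD.
move=> f.
exists (\sum_(j < m) c^-1 * absK (f (phi (delta_mx 0 j)))).
move=> v Nv; have [u phiu] := phiS v; subst v.
have phi00 : phi 0 = 0.
  by apply: (@addrI _ (phi 0)); rewrite addr0 -phiD addr0.
have absK_sum : forall (s : seq 'I_m) (F : 'I_m -> K),
    absK (\sum_(j <- s) F j) <= \sum_(j <- s) absK (F j).
  move=> s F; elim/big_ind2 : _ => [|a b x y h1 h2|j _]; first by rewrite absK0.
    by apply: le_trans (absKD _ _) _; exact: lerD.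
  exact: lexx.
have uc : `|u| <= c^-1.
  by rewrite -(ler_pM2l c0) mulfV ?gt_eqF //; exact: le_trans (hc u) Nv.
rewrite (row_sum_delta u) (big_morph phi phiD phi00) linear_sum.
apply: le_trans (absK_sum _ _) _; apply: ler_sum => j _.
rewrite phiZ linearZ /=.
rewrite (_ : absK (e (u 0 j) *: f (phi (delta_mx 0 j))) =
   absK (e (u 0 j) * f (phi (delta_mx 0 j)))) // absKM absKe.
apply: ler_wpM2r; first exact: absK_ge0.
exact: le_trans (entry_le u j) uc.
Qed.

Module CplxPart.
Import VectorInternalTheory.

Lemma bnd_real (R : realType) (V : vectType R) (N : V -> R) :
  is_norm (fun k : R => `|k|) N ->
  forall f : dual V, exists C, forall v, N v <= 1 -> `|f v| <= C.
Proof.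
move=> hN f.
apply: (@bounded_via R R (fun k : R => `|k|) (normr0 _) (@normr_ge0 _ _)
  (@ler_normD _ _) (@normrM _) V N hN _ r2v id).
- by move=> u v; rewrite raddfD.
- by move=> r u; rewrite linearZ.
- by [].
- by move=> u h; apply: r2v_inj; rewrite h linear0.
- by move=> v; exists (v2r v); exact: v2rK.
Qed.

Local Open Scope complex_scope.

Section Cplx.
Variables (R : realType) (V : vectType R[i]).

Definition phiC (w : 'rV[R]_(dim V + dim V)) : V :=
  r2v (\row_(j < dim V) ((w 0 (lshift (dim V) j)) +i* (w 0 (rshift (dim V) j)))).

End Cplx.

Lemma normc_ge0 (R : realType) (x : R[i]) : (0 <= ComplexField.Normc.normc x)%R.
Proof. by case: x => a b; exact: sqrtr_ge0. Qed.

Lemma bnd_cplx (R : realType) (V : vectType R[i]) (N : V -> R) :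
  is_norm (@ComplexField.Normc.normc R) N ->
  forall f : dual V, exists C, forall v, (N v <= 1)%R ->
    (ComplexField.Normc.normc (f v) <= C)%R.
Proof.
move=> hN f.
apply: (@bounded_via R _ (@ComplexField.Normc.normc R) (@ComplexField.Normc.normc0 _)
  (@normc_ge0 R) (@le_normcD _) (@ComplexField.Normc.normcM _) V N hN _ (@phiC R V)
  (fun r => r%:C)).
- move=> u v; rewrite /phiC -raddfD; congr r2v; apply/rowP => j; rewrite !mxE.
  by [].
- move=> r u; rewrite /phiC -linearZ; congr r2v; apply/rowP => j; rewrite !mxE /=.
  by apply/eqP; rewrite eq_complex /= mul0r subr0 mul0r addr0 !eqxx.
- by move=> r /=; rewrite expr0n addr0 sqrtr_sqr.
- move=> u h; have h0 : forall j, u 0 (lshift (dim V) j) = 0%R /\ u 0 (rshift (dim V) j) = 0%R.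
    move=> j; have : (\row_(j < dim V) ((u 0 (lshift (dim V) j)) +i* (u 0 (rshift (dim V) j)))) = 0%R.
      by apply: r2v_inj; rewrite linear0; exact: h.
    move/rowP/(_ j); rewrite !mxE => /eqP; rewrite eq_complex /= => /andP[/eqP -> /eqP ->].
    by [].
  apply/rowP => k; rewrite mxE; case: (splitP k) => j hj; have [h1 h2] := h0 j.
    by have -> : k = lshift (dim V) j by apply: val_inj.
  by have -> : k = rshift (dim V) j by apply: val_inj.
- move=> v; exists (row_mx (\row_(j < dim V) (let: a +i* _ := v2r v 0 j in a))
                 (\row_(j < dim V) (let: _ +i* b := v2r v 0 j in b)) : 'rV[R]_(dim V + dim V)).
  rewrite /phiC -[RHS]v2rK; congr r2v; apply/rowP => j.
  by rewrite mxE row_mxEl row_mxEr !mxE; case: (v2r v 0 j).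
Qed.

End CplxPart.
Import CplxPart.

Local Close Scope complex_scope.

Theorem mainTheorem6 (R : realType) :
  learning_lower_bound (fun k : R => `|k|) /\
  learning_lower_bound (@ComplexField.Normc.normc R).
Proof.
split.
- apply: generic_llb.
  + exact: normr0.
  + by move=> k; exact: normr_ge0.
  + by move=> k; exact: normrN.
  + by move=> a b; exact: ler_normD.
  + by move=> V N hN f; exact: bnd_real hN f.
- apply: generic_llb.
  + exact: ComplexField.Normc.normc0.
  + exact: normc_ge0.
  + by move=> k; exact: normcN.
  + by move=> a b; exact: le_normcD.
  + by move=> V N hN f; exact: bnd_cplx hN f.
Qed.
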